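(* Under either the overlap preference model or the cost preference model, for every $k\in\mathbb{N}$, the pair $\langle R,F\rangle$, where $R$ is the $k$-equal-representation shortlisting rule and $F$ is any unanimous allocation rule, is neither U-FSSP-P nor U-FSSP-O.
   Context: Throughout, $\mathbb{N}=\{1,2,3,\dots\}$. Let $\mathbb{P}=\{p_1,\dots,p_m\}$ be a finite set of projects, $c:\mathbb{P}\to\mathbb{N}$ a cost function with $c(P)=\sum_{p\in P}c(p)$, $B\in\mathbb{N}$ a budget with $c(p)\le B$ for all $p$; agents $\mathcal{N}=\{1,\dots,n\}$. Tie-breaking: for a nonempty family $\mathfrak{P}$ of subsets of $\mathbb{P}$, $T(\mathfrak{P})$ is the unique $P\in\mathfrak{P}$ such that for all $P'\in\mathfrak{P}\setminus\{P\}$ the lowest-index project of $(P\setminus P')\cup(P'\setminus P)$ lies in $P$. Greedy selection $\mathit{GREED}(P,\gg)$, for $P\subseteq\mathbb{P}$ and a strict linear order $\gg$ on $P$, examines projects in the order $\gg$ and selects a project iff doing so keeps the total cost of selected projects at most $B$. Shortlisting stage: shortlisting instance $I=\langle\mathbb{P},c,B\rangle$; shortlisting profile $\boldsymbol{P}=(P_1,\dots,P_n)$, $P_i\subseteq\mathbb{P}$, $\bigcup\boldsymbol{P}=P_1\cup\dots\cup P_n$; $(\boldsymbol{P}_{-i},P_i')$ replaces $P_i$ by $P_i'$. The $k$-equal-representation shortlisting rule returns $R(I,\boldsymbol{P})=T\big(\operatorname*{argmax}_{P\subseteq\bigcup\boldsymbol{P},\ c(P)\le kB}\sum_{i\in\mathcal{N}}\sum_{\ell=0}^{|P_i\cap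 P|}n^{-\ell}\big)$. Each agent $i$ has an awareness set $C_i\subseteq\mathbb{P}$; $\boldsymbol{C}=(C_1,\dots,C_n)$. Allocation stage: allocation instance $\langle\mathcal{P},c,B\rangle$, $\mathcal{P}\subseteq\mathbb{P}$; profile $\boldsymbol{A}=(A_1,\dots,A_n)$, $A_i\subseteq\mathcal{P}$; $A\subseteq\mathcal{P}$ is feasible if $c(A)\le B$; an allocation rule $F$ outputs a feasible $F(I,\boldsymbol{A})$; $F$ is unanimous if for every allocation instance $I$ and every profile $(A,\dots,A)$ with $A$ feasible, $F(I,(A,\dots,A))\supseteq A$. Preferences: each agent $i$ has a strict linear order $\rhd_i$ on $\mathbb{P}$; $\mathit{top}_i(\mathcal{P})=\mathit{GREED}(\mathcal{P},\rhd_i|_{\mathcal{P}})$. For $P\subseteq\mathbb{P}$: overlap model $A\succeq_P A'$ iff $|A\cap P|\ge|A'\cap P|$; cost model $A\succeq_P A'$ iff $c(A\cap P)\ge c(A'\cap P)$; $\succ_P$ its strict part. $\mathit{best}(\succ,\mathfrak{P})$ is the set of elements of $\mathfrak{P}$ undominated w.r.t. $\succ$. Best response: for $I=\langle\mathcal{P},c,B\rangle$, profile $\boldsymbol{A}$, agent $i$: $A_i^\star(I,\boldsymbol{A})=T(\mathit{best}(\succ_{\mathit{top}_i(\mathcal{P})},\{F(I,(\boldsymbol{A}_{-i},A_i'))\mid A_i'\subseteq\mathcal{P}\}))$ and $F^\star(I,\boldsymbol{A})=F(I,(\boldsymbol{A}_{-i},A_i^\star(I,\boldsymbol{A})))$.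 Manipulation: given $R,F$, shortlisting instance $I_1$, profile $\boldsymbol{P}$, agent $i$, $P_i'\subseteq\mathbb{P}$, let $\mathcal{P}=R(I_1,\boldsymbol{P})$, $\mathcal{P}'=R(I_1,(\boldsymbol{P}_{-i},P_i'))$, $I_2=\langle\mathcal{P},c,B\rangle$, $I_2'=\langle\mathcal{P}',c,B\rangle$, $Q=\mathit{top}_i(\mathcal{P}\cup\mathcal{P}')$. $P_i'$ is a successful pessimistic manipulation if for all profiles $\boldsymbol{A}$ on $\mathcal{P}$ and $\boldsymbol{A}'$ on $\mathcal{P}'$, $F^\star(I_2',\boldsymbol{A}')\succeq_Q F^\star(I_2,\boldsymbol{A})$, strictly for at least one pair; a successful optimistic manipulation if for some $\boldsymbol{A}$ on $\mathcal{P}$ and some $\boldsymbol{A}'$ on $\mathcal{P}'$, $F^\star(I_2',\boldsymbol{A}')\succ_Q F^\star(I_2,\boldsymbol{A})$. U-FSSP: for a preference model and a manipulation type, $\langle R,F\rangle$ is U-FSSP if for every shortlisting instance, awareness profile $\boldsymbol{C}$, shortlisting profile $\boldsymbol{P}$ with $P_{i'}\subseteq C_{i'}$ for all $i'$, and agent $i$, there is no $P_i'\subseteq C_i\cup\bigcup\boldsymbol{P}$ such that submitting $P_i'$ instead of $\mathit{top}_i(C_i\cup\bigcup\boldsymbol{P})$ (i.e., going from $(\boldsymbol{P}_{-i},\mathit{top}_i(C_i\cup\bigcup\boldsymbol{P}))$ to $(\boldsymbol{P}_{-i},P_i')$) is a successful manipulation of that type. U-FSSP-P and U-FSSP-O refer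 to pessimistic and optimistic manipulation. *)

(* Defs.v *)
From mathcomp Require Import all_boot all_order all_algebra.
Set Implicit Arguments.
Unset Strict Implicit.
Unset Printing Implicit Defensive.
Import Order.TTheory GRing.Theory Num.Theory.

(* Projects are 'I_m (project p_{j+1} is the ordinal j, so "lowest index"
   = smallest ordinal); agents are 'I_n. *)

Definition cost {m : nat} (c : 'I_m -> nat) (S : {set 'I_m}) : nat :=
  \sum_(p in S) c p.

Definition valid_instance {m : nat} (c : 'I_m -> nat) (B : nat) : bool :=
  (0 < B) && [forall p, (0 < c p) && (c p <= B)].

Definition lex_wins {m : nat} (P P' : {set 'I_m}) : bool :=
  [exists x, (x \in P :\: P') &&
     [forall y : 'I_m, (val y < val x)%N ==> ((y \in P) == (y \in P'))]].

(* tie-breaking T (unique on nonempty families; default set0 otherwise) *)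
Definition tiebreak {m : nat} (fam : {set {set 'I_m}}) : {set 'I_m} :=
  odflt set0 [pick P in fam | [forall P' in fam, (P' != P) ==> lex_wins P P']].

(* GREED(P, >>) where the strict linear order >> on all projects is given by
   the sequence [ord] (most preferred first, a permutation of all projects),
   restricted to P. *)
Definition greed {m : nat} (c : 'I_m -> nat) (B : nat) (ord : seq 'I_m)
  (P : {set 'I_m}) : {set 'I_m} :=
  foldl (fun S p => if (p \in P) && (cost c S + c p <= B) then p |: S else S)
        set0 ord.

Definition top {m : nat} (c : 'I_m -> nat) (B : nat) (ord : seq 'I_m)
  (P : {set 'I_m}) : {set 'I_m} := greed c B ord P.

Definition bigU {n m : nat} (P : 'I_n -> {set 'I_m}) : {set 'I_m} :=
  \bigcup_(j < n) P j.

Definition upd {n m : nat} (P : 'I_n -> {set 'I_m}) (i : 'I_n) (X : {set 'I_m})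
  : 'I_n -> {set 'I_m} := fun j => if j == i then X else P j.

Definition er_score {n m : nat} (P : 'I_n -> {set 'I_m}) (S : {set 'I_m}) : rat :=
  (\sum_(j < n) \sum_(l < #|P j :&: S|.+1) ((n%:R : rat) ^+ l)^-1)%R.

Definition R_er {n m : nat} (k : nat) (c : 'I_m -> nat) (B : nat)
  (P : 'I_n -> {set 'I_m}) : {set 'I_m} :=
  tiebreak [set S in powerset (bigU P) |
    (cost c S <= k * B) &&
    [forall S' in powerset (bigU P),
       (cost c S' <= k * B) ==> (er_score P S' <= er_score P S)%R]].

(* an allocation rule: defined on every allocation instance <calP, c, B>
   (for any number of projects m and agents n) and every profile *)
Definition alloc_rule : Type :=
  forall (n m : nat), {set 'I_m} -> ('I_m -> nat) -> nat ->
    ('I_n -> {set 'I_m}) -> {set 'I_m}.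

Definition profile_on {n m : nat} (calP : {set 'I_m}) (A : 'I_n -> {set 'I_m})
  : Prop := forall j, A j \subset calP.

Definition is_alloc_rule (F : alloc_rule) : Prop :=
  forall (n m : nat) (calP : {set 'I_m}) (c : 'I_m -> nat) (B : nat)
         (A : 'I_n -> {set 'I_m}),
    valid_instance c B -> profile_on calP A ->
    F n m calP c B A \subset calP /\ cost c (F n m calP c B A) <= B.

Definition unanimous (F : alloc_rule) : Prop :=
  forall (n m : nat) (calP : {set 'I_m}) (c : 'I_m -> nat) (B : nat)
         (A : {set 'I_m}),
    valid_instance c B -> A \subset calP -> cost c A <= B ->
    A \subset F n m calP c B (fun _ : 'I_n => A).

Inductive pref_model := Overlap | CostModel.

(* A >=_Q A'  iff  util Q A' <= util Q A *)
Definition util (mo : pref_model) {m : nat} (c : 'I_m -> nat) (Q A : {set 'I_m})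
  : nat :=
  match mo with
  | Overlap => #|A :&: Q|
  | CostModel => cost c (A :&: Q)
  end.

Definition best (mo : pref_model) {m : nat} (c : 'I_m -> nat) (Q : {set 'I_m})
  (fam : {set {set 'I_m}}) : {set {set 'I_m}} :=
  [set X in fam | [forall Y in fam, ~~ (util mo c Q X < util mo c Q Y)]].

Definition A_star (F : alloc_rule) (mo : pref_model) {n m : nat}
  (calP : {set 'I_m}) (c : 'I_m -> nat) (B : nat) (ord : seq 'I_m)
  (i : 'I_n) (A : 'I_n -> {set 'I_m}) : {set 'I_m} :=
  tiebreak (best mo c (top c B ord calP)
              [set F n m calP c B (upd A i X) | X in powerset calP]).

Definition F_star (F : alloc_rule) (mo : pref_model) {n m : nat}
  (calP : {set 'I_m}) (c : 'I_m -> nat) (B : nat) (ord : seq 'I_m)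
  (i : 'I_n) (A : 'I_n -> {set 'I_m}) : {set 'I_m} :=
  F n m calP c B (upd A i (A_star F mo calP c B ord i A)).

Inductive manip_type := Pessimistic | Optimistic.

Definition successful_manip (mt : manip_type) (mo : pref_model) (k : nat)
  (F : alloc_rule) {n m : nat} (c : 'I_m -> nat) (B : nat) (ord : seq 'I_m)
  (P : 'I_n -> {set 'I_m}) (i : 'I_n) (P' : {set 'I_m}) : Prop :=
  let calP := R_er k c B P in
  let calP' := R_er k c B (upd P i P') in
  let Q := top c B ord (calP :|: calP') in
  match mt with
  | Pessimistic =>
      (forall A A' : 'I_n -> {set 'I_m}, profile_on calP A -> profile_on calP' A' ->
         util mo c Q (F_star F mo calP c B ord i A)
           <= util mo c Q (F_star F mo calP' c B ord i A')) /\
      (exists A A' : 'I_n -> {set 'I_m}, profile_on calP A /\ profile_on calP' A' /\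
         util mo c Q (F_star F mo calP c B ord i A)
           < util mo c Q (F_star F mo calP' c B ord i A'))
  | Optimistic =>
      exists A A' : 'I_n -> {set 'I_m}, profile_on calP A /\ profile_on calP' A' /\
         util mo c Q (F_star F mo calP c B ord i A)
           < util mo c Q (F_star F mo calP' c B ord i A')
  end.

Definition UFSSP (mt : manip_type) (mo : pref_model) (k : nat) (F : alloc_rule)
  : Prop :=
  forall (n m : nat) (c : 'I_m -> nat) (B : nat) (pref : 'I_n -> seq 'I_m),
    valid_instance c B ->
    (forall j, perm_eq (pref j) (enum 'I_m)) ->
    forall (C P : 'I_n -> {set 'I_m}),
      (forall j, P j \subset C j) ->
      forall (i : 'I_n) (P' : {set 'I_m}),
        P' \subset C i :|: bigU P ->
        ~ successful_manip mt mo k F c B (pref i)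
            (upd P i (top c B (pref i) (C i :|: bigU P))) i P'.

(* Main.v *)
Require Import Defs.
From mathcomp Require Import all_boot all_order all_algebra.
From mathcomp Require Import zify ring lra.
From Stdlib Require Import FunctionalExtensionality.
Set Implicit Arguments.
Unset Strict Implicit.
Unset Printing Implicit Defensive.
Import Order.TTheory GRing.Theory Num.Theory.

Lemma tiebreak_set1 (m : nat) (X : {set 'I_m}) : tiebreak [set X] = X.
Proof.
rewrite /tiebreak; case: pickP => [P /andP [] | h].
  by rewrite inE => /eqP ->.
have := h X; rewrite inE eqxx /=.
have -> : [forall P' in [set X], (P' != X) ==> lex_wins X P'] = true.
  by apply/forall_inP => P'; rewrite inE => ->.
by [].
Qed.

Lemma tiebreak_in (m : nat) (fam : {set {set 'I_m}}) :
  tiebreak fam = set0 \/ tiebreak fam \in fam.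
Proof.
rewrite /tiebreak; case: pickP => [P /andP [h _] | _]; by [right | left].
Qed.

Lemma cost_sub (m : nat) (c : 'I_m -> nat) (A B : {set 'I_m}) :
  A \subset B -> cost c A <= cost c B.
Proof.
move=> sAB; rewrite /cost [X in _ <= X](big_setID A) /= (setIidPr sAB); exact: leq_addr.
Qed.

Lemma cost_pos (m : nat) (c : 'I_m -> nat) (A : {set 'I_m}) (x : 'I_m) :
  (forall p, 0 < c p) -> x \in A -> 0 < cost c A.
Proof.
move=> hc xA; rewrite /cost (bigD1 x) //=; have := hc x; lia.
Qed.

Lemma util0 mo (m : nat) (c : 'I_m -> nat) (Q A : {set 'I_m}) :
  A :&: Q = set0 -> util mo c Q A = 0.
Proof. by move=> h; case: mo; rewrite /util h ?cards0 // /cost big_set0. Qed.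

Lemma util_le mo (m : nat) (c : 'I_m -> nat) (Q A : {set 'I_m}) :
  util mo c Q A <= util mo c Q Q.
Proof.
case: mo; rewrite /util setIid.
  exact/subset_leq_card/subsetIr.
exact/cost_sub/subsetIr.
Qed.

Lemma util_full mo (m : nat) (c : 'I_m -> nat) (Q A : {set 'I_m}) :
  (forall p, 0 < c p) -> util mo c Q Q <= util mo c Q A -> Q \subset A.
Proof.
move=> hc; case: mo; rewrite /util setIid => h.
  have e : A :&: Q = Q.
    by apply/eqP; rewrite eqEcard subsetIr h.
  by rewrite -e subsetIl.
apply/subsetP => x xQ; case xA: (x \in A) => //.
have : 0 < cost c (Q :\: A) by apply: (@cost_pos _ _ _ x hc); rewrite !inE xA xQ.
move: h; rewrite {1}/cost (big_setID A) /= -/(cost c (Q :&: A)) -/(cost c (Q :\: A)) setIC.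
lia.
Qed.

Lemma upd_const (n m : nat) (Z : {set 'I_m}) (i : 'I_n) :
  upd (fun _ => Z) i Z = (fun _ => Z).
Proof. by apply: functional_extensionality => j; rewrite /upd; case: ifP. Qed.

Unset Implicit Arguments.
Section FS.
Variables (F : alloc_rule) (mo : pref_model) (n m : nat) (c : 'I_m -> nat) (B : nat).
Variables (ord : seq 'I_m) (i : 'I_n).
Hypothesis hF : is_alloc_rule F.
Hypothesis hU : unanimous F.
Hypothesis hv : valid_instance c B.

Lemma cpos : forall p, 0 < c p.
Proof. by move=> p; move: hv => /andP [_ /forallP /(_ p) /andP []]. Qed.

Lemma Fok {calP : {set 'I_m}} {A : 'I_n -> {set 'I_m}} :
  profile_on calP A -> F n m calP c B A \subset calP /\ cost c (F n m calP c B A) <= B.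
Proof. exact: hF hv. Qed.

Lemma F_star_sub (calP : {set 'I_m}) (A : 'I_n -> {set 'I_m}) :
  profile_on calP A -> F_star F mo calP c B ord i A \subset calP.
Proof.
move=> hA; rewrite /F_star.
have hfam : forall Y, Y \in [set F n m calP c B (upd A i X) | X in powerset calP] -> Y \subset calP.
  move=> Y /imsetP [X]; rewrite inE => hX ->.
  apply: (proj1 (Fok _)) => j; rewrite /upd; case: ifP => _ //.
apply: (proj1 (Fok _)) => j; rewrite /upd; case: ifP => _ //.
rewrite /A_star; case: (tiebreak_in (best mo c (top c B ord calP)
              [set F n m calP c B (upd A i X) | X in powerset calP])) => [->|h].
  exact: sub0set.
by apply: hfam; move: h; rewrite inE => /andP [].
Qed.

Lemma F_star_Z (calP Z : {set 'I_m}) :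
  Z \subset calP -> cost c Z <= B ->
  (forall W : {set 'I_m}, Z \subset W -> cost c W <= B -> W = Z) ->
  top c B ord calP = Z ->
  F_star F mo calP c B ord i (fun _ => Z) = Z.
Proof.
move=> sZ cZ hmax htop.
set fam := [set F n m calP c B (upd (fun _ => Z) i X) | X in powerset calP].
have hfam : forall Y, Y \in fam -> Y \subset calP /\ cost c Y <= B.
  move=> Y /imsetP [X]; rewrite inE => hX ->.
  apply: Fok => j; rewrite /upd; case: ifP => _ //.
have FZ : F n m calP c B (fun _ => Z) = Z.
  apply: hmax; last first.
    by apply: (proj2 (Fok _)) => j.
  exact: hU.
have Zfam : Z \in fam.
  by apply/imsetP; exists Z; rewrite ?inE // upd_const FZ.
have hbest : best mo c Z fam = [set Z].
  apply/setP => Y; rewrite /best !inE; apply/andP/eqP.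
    move=> [Yf /forall_inP /(_ Z Zfam)]; rewrite -leqNgt => h.
    apply: hmax; first exact: (util_full cpos h).
    exact: (proj2 (hfam Y Yf)).
  move=> ->; split => //; apply/forall_inP => Y' _; rewrite -leqNgt; exact: util_le.
rewrite /F_star /A_star htop -/fam hbest tiebreak_set1 upd_const; exact: FZ.
Qed.

End FS.

Lemma R_er_unique (n m k : nat) (c : 'I_m -> nat) (B : nat) (P : 'I_n -> {set 'I_m})
  (Sst : {set 'I_m}) :
  Sst \subset Defs.bigU P -> cost c Sst <= k * B ->
  (forall S, cost c S <= k * B -> (er_score P S <= er_score P Sst)%R) ->
  (forall S, cost c S <= k * B -> (er_score P Sst <= er_score P S)%R -> S = Sst) ->
  R_er k c B P = Sst.
Proof.
move=> hsub hc h1 h2; rewrite /R_er.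
have -> : [set S in powerset (Defs.bigU P) | (cost c S <= k * B) &&
    [forall S' in powerset (Defs.bigU P), (cost c S' <= k * B) ==> (er_score P S' <= er_score P S)%R]]
    = [set Sst].
  apply/setP => S; rewrite !inE; apply/idP/eqP.
    move=> /andP [_ /andP [hS /forall_inP H]]; apply: h2 => //.
    have hm : Sst \in powerset (Defs.bigU P) by rewrite powersetE.
    exact: (implyP (H Sst hm) hc).
  move=> ->; rewrite hsub hc /=; apply/forall_inP => S' _; apply/implyP => hS'; exact: h1.
exact: tiebreak_set1.
Qed.

Set Implicit Arguments.
Lemma arith_truth (N K x : nat) (a0 a1 a2 a3 : bool) :
  2 <= N -> x <= K -> 2*a0 + a1 + a2 + 2*a3 + 2*x <= 2*K + 2 ->
  N * (a0 + (a1 || a2) + 2*a3 + 3*x) + (a1 && a2) <= N * (3*K + 2) /\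
  (N * (3*K + 2) <= N * (a0 + (a1 || a2) + 2*a3 + 3*x) + (a1 && a2) ->
     [/\ a0 = false, a1 = false, a2 = false, a3 = true & x = K]).
Proof.
move=> hN hx hc.
have L : a0 + (a1 || a2) + 2*a3 + 3*x <= 3*K+2 /\ (a0 + (a1 || a2) + 2*a3 + 3*x = 3*K+2 -> [/\ a0 = false, a1 = false, a2 = false, a3 = true & x = K]).
  case: a0 a1 a2 a3 hc => [] [] [] [] /= hc; (split; first lia); move=> h; (exfalso; lia) || (split => //; lia).
case: L => L1 L2.
set V := a0 + (a1 || a2) + 2*a3 + 3*x in L1 L2 *.
case: (leqP V (3*K+1)) => hV.
  have h1 : N * V <= N * (3*K+1) by rewrite leq_mul2l hV orbT.
  have h2 : N * (3*K+2) = N * (3*K+1) + N by rewrite !mulnDr; lia.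
  split; first by case: (a1 && a2) => /=; lia.
  by case: (a1 && a2) => /=; lia.
have hV' : V = 3*K+2 by lia.
have [c0 c1 c2 c3 c4] := L2 hV'.
rewrite c1 /= addn0 hV'; split => // _.
Qed.

Lemma arith_manip (N K x : nat) (a0 a1 a2 a3 : bool) :
  2 <= N -> x <= K -> 2*a0 + a1 + a2 + 2*a3 + 2*x <= 2*K + 2 ->
  N * (a1 + (a1 || a2) + 2*a3 + 3*x) + (a1 && a2) <= N * (3*K + 2) + 1 /\
  (N * (3*K + 2) + 1 <= N * (a1 + (a1 || a2) + 2*a3 + 3*x) + (a1 && a2) ->
     [/\ a0 = false, a1 = true, a2 = true, a3 = false & x = K]).
Proof.
move=> hN hx hc.
have L : a1 + (a1 || a2) + 2*a3 + 3*x <= 3*K+2 /\ (a1 + (a1 || a2) + 2*a3 + 3*x = 3*K+2 -> (a1 && a2 = false) \/ [/\ a0 = false, a1 = true, a2 = true, a3 = false & x = K]).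
  case: a0 a1 a2 a3 hc => [] [] [] [] /= hc; (split; first lia); move=> h;
  (exfalso; lia) || (by left) || (right; split => //; lia).
case: L => L1 L2.
set V := a1 + (a1 || a2) + 2*a3 + 3*x in L1 L2 *.
case: (leqP V (3*K+1)) => hV.
  have h1 : N * V <= N * (3*K+1) by rewrite leq_mul2l hV orbT.
  have h2 : N * (3*K+2) = N * (3*K+1) + N by rewrite !mulnDr; lia.
  split; first by case: (a1 && a2) => /=; lia.
  by case: (a1 && a2) => /=; lia.
have hV' : V = 3*K+2 by lia.
case: (L2 hV') => [hb|hc'].
  rewrite hb hV' addn0; split; [lia | move=> h; lia].
case: hc' => c0 c1 c2 c3 c4; rewrite c1 c2 /= hV'; split => //.
Qed.

Section Inst.
Variable K : nat.
Local Notation m := K.+4.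
Local Notation n := (3 * K).+4.

Definition pt : 'I_m := inord 0.
Definition pq : 'I_m := inord 1.
Definition pr : 'I_m := inord 2.
Definition ps : 'I_m := inord 3.

Definition cc (p : 'I_m) : nat := if (val p == 1) || (val p == 2) then 1 else 2.

Definition PPn (X : {set 'I_m}) (j : nat) : {set 'I_m} :=
  if j == 0 then X else if j == 1 then pr |: [set pq]
  else if j <= 3 then [set ps] else [set inord ((j - 4) %/ 3).+4].

Definition PP (X : {set 'I_m}) : 'I_n -> {set 'I_m} := fun j => PPn X (val j).

Definition h2 (x : nat) : nat := n ^ 2 + n * (0 < x) + (1 < x).

Lemma h_scaled (x : nat) : x <= 2 ->
  ((n%:R : rat) ^+ 2 * \sum_(l < x.+1) ((n%:R : rat) ^+ l)^-1 = (h2 x)%:R)%R.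
Proof.
have n0 : (n%:R : rat) != 0%R by rewrite pnatr_eq0.
rewrite /h2; case: x => [|[|[|x]]] // _; rewrite !big_ord_recr big_ord0 /= ?natrD ?natrM ?natrX;
  move: n0; generalize (n%:R : rat) => N N0; field; by rewrite ?N0.
Qed.


Lemma triple_sum (f : nat -> nat) (L : nat) :
  \sum_(0 <= e < 3 * L) f (e %/ 3) = 3 * \sum_(0 <= l < L) f l.
Proof.
elim: L => [|L IH]; first by rewrite muln0 !big_geq.
rewrite (_ : 3 * L.+1 = (3 * L).+3); last by lia.
rewrite !big_nat_recr //= IH mulnDr.
have e0 : (3 * L) %/ 3 = L by lia.
have e1 : (3 * L).+1 %/ 3 = L by lia.
have e2 : (3 * L).+2 %/ 3 = L by lia.
rewrite e0 e1 e2; lia.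
Qed.

Lemma card1I (p : 'I_m) (S : {set 'I_m}) : #|[set p] :&: S| = (p \in S).
Proof.
case pS: (p \in S).
  by rewrite (_ : [set p] :&: S = [set p]) ?cards1 //; apply/setP => x; rewrite !inE; case: eqP => // ->.
by rewrite (_ : [set p] :&: S = set0) ?cards0 //; apply/setP => x; rewrite !inE; case: eqP => // ->; rewrite pS.
Qed.

Lemma pq_neq_pr : pq != pr.
Proof. by apply/eqP => /(congr1 val); rewrite /= !inordK. Qed.

Lemma h2_pair (S : {set 'I_m}) :
  h2 #|(pr |: [set pq]) :&: S| = n ^ 2 + n * ((pq \in S) || (pr \in S)) + ((pq \in S) && (pr \in S)).
Proof.
have ne := pq_neq_pr.
have ne' : pr != pq by rewrite eq_sym.
case qS: (pq \in S); case rS: (pr \in S).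
- have E : (pr |: [set pq]) :&: S = pr |: [set pq].
    apply/setP => x; rewrite !inE; have [->|xr] := eqVneq x pr;
      [by rewrite ?qS ?rS ?(negbTE ne') ?eqxx /= |
       have [->|xq] := eqVneq x pq; by rewrite ?qS ?rS ?(negbTE ne) ?eqxx ?andbF /=].
  by rewrite E cardsU1 cards1 !inE (negbTE ne') /h2 muln1.
- have E : (pr |: [set pq]) :&: S = [set pq].
    apply/setP => x; rewrite !inE; have [->|xr] := eqVneq x pr;
      [by rewrite ?qS ?rS ?(negbTE ne') ?eqxx /= |
       have [->|xq] := eqVneq x pq; by rewrite ?qS ?rS ?(negbTE ne) ?eqxx ?andbF /=].
  by rewrite E cards1 /h2 muln1 addn0.
- have E : (pr |: [set pq]) :&: S = [set pr].
    apply/setP => x; rewrite !inE; have [->|xr] := eqVneq x pr;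
      [by rewrite ?qS ?rS ?(negbTE ne') ?eqxx /= |
       have [->|xq] := eqVneq x pq; by rewrite ?qS ?rS ?(negbTE ne) ?eqxx ?andbF /=].
  by rewrite E cards1 /h2 muln1 addn0.
- have E : (pr |: [set pq]) :&: S = set0.
    apply/setP => x; rewrite !inE; have [->|xr] := eqVneq x pr;
      [by rewrite ?qS ?rS ?(negbTE ne') ?eqxx /= |
       have [->|xq] := eqVneq x pq; by rewrite ?qS ?rS ?(negbTE ne) ?eqxx ?andbF /=].
  by rewrite E cards0 /h2 muln0 !addn0.
Qed.

Definition aS (S : {set 'I_m}) (j : nat) : bool := (inord j : 'I_m) \in S.

Lemma Nsum (X : {set 'I_m}) (S : {set 'I_m}) :
  \sum_(j < n) h2 #|PP X j :&: S| =
  h2 #|X :&: S| + h2 #|(pr |: [set pq]) :&: S| + 2 * h2 (aS S 3)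
  + 3 * \sum_(0 <= l < K) h2 (aS S l.+4).
Proof.
rewrite /PP -(big_mkord xpredT (fun j => h2 #|PPn X j :&: S|)).
rewrite !big_nat_recl //=.
rewrite /PPn /=.
have E : \sum_(0 <= i < 3 * K) h2 #|[set (inord ((i.+4 - 4) %/ 3).+4 : 'I_m)] :&: S|
       = \sum_(0 <= e < 3 * K) (fun l => h2 ((inord l.+4 : 'I_m) \in S)) (e %/ 3).
  apply: eq_big_nat => e _; rewrite card1I; congr (h2 (inord _ \in S)); lia.
rewrite E (triple_sum (fun l => h2 ((inord l.+4 : 'I_m) \in S))) card1I /aS /ps; by rewrite mul2n -addnn !addnA.
Qed.


Lemma er_scaled (X S : {set 'I_m}) : #|X| <= 2 ->
  ((n%:R : rat) ^+ 2 * er_score (PP X) S = (\sum_(j < n) h2 #|PP X j :&: S|)%:R)%R.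
Proof.
move=> hX; rewrite /er_score mulr_sumr natr_sum; apply: eq_bigr => j _.
apply: h_scaled; apply: leq_trans (subset_leq_card (subsetIl _ _)) _.
rewrite /PP /PPn; case: ifP => // _; case: ifP => [_|_]; first by rewrite cards2; case: (_ != _).
by case: ifP => _; rewrite cards1.
Qed.

Lemma inordK' (j : nat) : j < m -> val (inord j : 'I_m) = j.
Proof. by move=> h; rewrite /= inordK. Qed.

Lemma cost_formula (S : {set 'I_m}) :
  cost cc S = 2 * aS S 0 + aS S 1 + aS S 2 + 2 * aS S 3 + 2 * \sum_(0 <= l < K) aS S l.+4.
Proof.
rewrite /cost big_mkcond /=.
have E : \sum_(p < m) (if p \in S then cc p else 0)
   = \sum_(p < m) (fun j => if (inord j : 'I_m) \in S then cc (inord j) else 0) (val p).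
  by apply: eq_bigr => p _ /=; rewrite inord_val.
rewrite E -(big_mkord xpredT (fun j => if (inord j : 'I_m) \in S then cc (inord j) else 0)).
rewrite !big_nat_recl //=.
have E2 : \sum_(0 <= i < K) (if (inord i.+4 : 'I_m) \in S then cc (inord i.+4) else 0)
   = \sum_(0 <= i < K) 2 * aS S i.+4.
  apply: eq_big_nat => l /andP [_ hl]; rewrite /aS /cc.
  have -> : val (inord l.+4 : 'I_m) = l.+4 by apply: inordK'; lia.
  by case: (_ \in S).
rewrite E2 -big_distrr /= /cc /aS !inordK' //.
by case: (inord 0 \in S); case: (inord 1 \in S); case: (inord 2 \in S); case: (inord 3 \in S);
  rewrite /= ?addnA.
Qed.

Lemma cc_pos (p : 'I_m) : 0 < cc p.
Proof. by rewrite /cc; case: ifP. Qed.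

Lemma valid : valid_instance cc 2.
Proof. by apply/andP; split => //; apply/forallP => p; rewrite /cc; case: ifP. Qed.

Lemma cc_pt : cc pt = 2. Proof. by rewrite /cc /pt inordK'. Qed.
Lemma cc_pq : cc pq = 1. Proof. by rewrite /cc /pq inordK'. Qed.
Lemma cc_pr : cc pr = 1. Proof. by rewrite /cc /pr inordK'. Qed.

Lemma cost0 : cost cc set0 = 0. Proof. by rewrite /cost big_set0. Qed.
Lemma cost1 p : cost cc [set p] = cc p. Proof. by rewrite /cost big_set1. Qed.

Lemma pr_notin : pr \notin [set pq].
Proof. by rewrite inE eq_sym pq_neq_pr. Qed.

Lemma costZ : cost cc (pr |: [set pq]) = 2.
Proof. by rewrite /cost big_setU1 ?pr_notin //= -/(cost cc [set pq]) cost1 cc_pq cc_pr. Qed.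

Lemma enum_eq : enum 'I_m = pt :: pq :: pr :: ps :: [seq inord j | j <- iota 4 K].
Proof.
have -> : enum 'I_m = [seq (inord j : 'I_m) | j <- iota 0 m].
  apply: (inj_map val_inj); rewrite val_enum_ord -map_comp map_id_in // => j.
  by rewrite mem_iota => /andP [_ h] /=; rewrite inordK.
by [].
Qed.

Lemma stuck (V : {set 'I_m}) (l : seq 'I_m) (S : {set 'I_m}) : cost cc S = 2 ->
  foldl (fun S p => if (p \in V) && (cost cc S + cc p <= 2) then p |: S else S) S l = S.
Proof.
move=> h; elim: l => //= p l IH.
have -> : (cost cc S + cc p <= 2) = false by have := cc_pos p; lia.
by rewrite andbF.
Qed.

Lemma foldl_cons' (T R : Type) (f : R -> T -> R) S p l : foldl f S (p :: l) = foldl f (f S p) l.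
Proof. by []. Qed.

Lemma top_t (V : {set 'I_m}) : pt \in V -> top cc 2 (enum 'I_m) V = [set pt].
Proof.
move=> h; rewrite /top /greed enum_eq foldl_cons' stuck /= h cost0 cc_pt /= ?setU0 //.
by rewrite cost1 cc_pt.
Qed.

Lemma top_Z (V : {set 'I_m}) : pt \notin V -> pq \in V -> pr \in V ->
  top cc 2 (enum 'I_m) V = pr |: [set pq].
Proof.
move=> h1 h2 h3; rewrite /top /greed enum_eq 3!foldl_cons' stuck /= (negbTE h1) /= h2 cost0 cc_pq /= setU0.
  by rewrite h3 cost1 cc_pq cc_pr /=.
by rewrite h3 cost1 cc_pq cc_pr /= costZ.
Qed.

Lemma in_bigU (X : {set 'I_m}) (p : 'I_m) : 0 < val p -> p \in Defs.bigU (PP X).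
Proof.
move=> hp; rewrite /Defs.bigU.
have pE : p = inord (val p) by rewrite inord_val.
have mem : forall J, J < n -> p \in PPn X J -> p \in \bigcup_(j < n) PP X j.
  move=> J hJ hin; apply/bigcupP; exists (inord J) => //.
  by rewrite /PP (_ : val (inord J : 'I_n) = J) // /= inordK.
case: (ltnP (val p) 4) => h4.
  case: (ltnP (val p) 3) => h3.
    apply: (mem 1) => //; rewrite /PPn /= !inE.
    have : (val p == 1) || (val p == 2) by lia.
    by case/orP => /eqP e; rewrite pE e eqxx ?orbT.
  apply: (mem 2) => //; rewrite /PPn /= !inE.
  by rewrite pE (_ : val p = 3) //; lia.
apply: (mem (3 * (val p - 4)).+4); first by have hpm : val p < m := ltn_ord p; lia.
rewrite /PPn /= inE.
have -> : (3 * (val p - 4)).+4 - 4 = 3 * (val p - 4) by lia.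
by rewrite {1}pE; apply/eqP; congr inord; lia.
Qed.

Definition St : {set 'I_m} := [set p : 'I_m | 3 <= val p].
Definition Sm : {set 'I_m} := [set p : 'I_m | (0 < val p) && (val p != 3)].

Lemma aS_St j : j < m -> aS St j = (3 <= j).
Proof. by move=> h; rewrite /aS inE inordK'. Qed.
Lemma aS_Sm j : j < m -> aS Sm j = (0 < j) && (j != 3).
Proof. by move=> h; rewrite /aS inE inordK'. Qed.

Lemma sum_bool (b : nat -> bool) (L : nat) :
  \sum_(0 <= l < L) (b l : nat) <= L /\
  (\sum_(0 <= l < L) (b l : nat) = L -> forall l, l < L -> b l).
Proof.
elim: L => [|L [IH1 IH2]]; first by rewrite big_geq.
rewrite big_nat_recr //=; split; first by case: (b L) => /=; lia.
move=> h l hl; case: (ltnP l L) => hlL.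
  apply: IH2 => //; case: (b L) h => /=; lia.
have -> : l = L by lia.
by case: (b L) h => //=; lia.
Qed.

Lemma eq_from_aS (S T : {set 'I_m}) : (forall j, j < m -> aS S j = aS T j) -> S = T.
Proof.
by move=> H; apply/setP => p; have := H (val p) (ltn_ord p); rewrite /aS inord_val.
Qed.

Lemma h2b (b : bool) : h2 b = n ^ 2 + n * b.
Proof. by case: b; rewrite /h2 /= ?muln1 ?muln0 ?addn0. Qed.

Lemma sumh2 (S : {set 'I_m}) :
  \sum_(0 <= l < K) h2 (aS S l.+4) = K * n ^ 2 + n * \sum_(0 <= l < K) (aS S l.+4 : nat).
Proof.
under eq_big_nat => l _ do rewrite h2b.
by rewrite big_split /= sum_nat_const_nat subn0 big_distrr.
Qed.

Definition Ntot (X S : {set 'I_m}) := \sum_(j < n) h2 #|PP X j :&: S|.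
Definition xS (S : {set 'I_m}) := \sum_(0 <= l < K) (aS S l.+4 : nat).
Definition C0 := n ^ 2 + n ^ 2 + 2 * n ^ 2 + 3 * (K * n ^ 2).

Lemma Nt_eq (S : {set 'I_m}) :
  Ntot [set pt] S = C0 + (n * (aS S 0 + (aS S 1 || aS S 2) + 2 * aS S 3 + 3 * xS S) + (aS S 1 && aS S 2)).
Proof.
rewrite /Ntot Nsum sumh2 h2_pair card1I h2b.
rewrite -/(xS S) /C0.
change (pt \in S) with (aS S 0); change (pq \in S) with (aS S 1); change (pr \in S) with (aS S 2).
rewrite h2b; lia.
Qed.

Lemma Nm_eq (S : {set 'I_m}) :
  Ntot [set pq] S = C0 + (n * (aS S 1 + (aS S 1 || aS S 2) + 2 * aS S 3 + 3 * xS S) + (aS S 1 && aS S 2)).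
Proof.
rewrite /Ntot Nsum sumh2 h2_pair card1I h2b.
rewrite -/(xS S) /C0.
change (pq \in S) with (aS S 1); change (pr \in S) with (aS S 2).
rewrite h2b; lia.
Qed.

Lemma cost_aS (S : {set 'I_m}) :
  cost cc S = 2 * aS S 0 + aS S 1 + aS S 2 + 2 * aS S 3 + 2 * xS S.
Proof. by rewrite cost_formula. Qed.

Lemma xS_full (S : {set 'I_m}) : xS S <= K /\ (xS S = K -> forall l, l < K -> aS S l.+4).
Proof. exact: (sum_bool (fun l => aS S l.+4)). Qed.

Lemma xS_St : xS St = K.
Proof.
rewrite /xS (eq_big_nat _ _ (F2 := fun _ => 1)); first by rewrite sum_nat_const_nat subn0 muln1.
by move=> l /andP [_ hl]; rewrite aS_St //; lia.
Qed.

Lemma xS_Sm : xS Sm = K.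
Proof.
rewrite /xS (eq_big_nat _ _ (F2 := fun _ => 1)); first by rewrite sum_nat_const_nat subn0 muln1.
by move=> l /andP [_ hl]; rewrite aS_Sm //; lia.
Qed.

Lemma er_le (X S T : {set 'I_m}) : #|X| <= 2 ->
  (er_score (PP X) S <= er_score (PP X) T)%R = (Ntot X S <= Ntot X T).
Proof.
move=> hX.
rewrite -(ler_pM2l (x := (n%:R : rat) ^+ 2)) ?exprn_gt0 ?ltr0n // !er_scaled // ler_nat.
by [].
Qed.

Lemma eq_config (S T : {set 'I_m}) :
  aS S 0 = aS T 0 -> aS S 1 = aS T 1 -> aS S 2 = aS T 2 -> aS S 3 = aS T 3 ->
  xS S = K -> xS T = K -> S = T.
Proof.
move=> e0 e1 e2 e3 xs xt; apply: eq_from_aS => j hj.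
case: j hj => [|[|[|[|l]]]] hj //.
have hl : l < K by lia.
by rewrite ((proj2 (xS_full S)) xs l hl) ((proj2 (xS_full T)) xt l hl).
Qed.

Lemma R_truth : R_er K.+1 cc 2 (PP [set pt]) = St.
Proof.
have c1 : #|[set pt]| <= 2 by rewrite cards1.
apply: R_er_unique.
- by apply/subsetP => p; rewrite inE => h; apply: in_bigU; lia.
- by rewrite cost_aS xS_St !aS_St //=; lia.
- move=> S hS; rewrite er_le // !Nt_eq xS_St !aS_St //= leq_add2l.
  have [xK _] := xS_full S.
  have [h1 _] := @arith_truth n K (xS S) (aS S 0) (aS S 1) (aS S 2) (aS S 3) ltac:(lia) xK
     ltac:(move: hS; rewrite cost_aS; lia).
  lia.
- move=> S hS; rewrite er_le // !Nt_eq xS_St !aS_St //= leq_add2l => hle.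
  have [xK _] := xS_full S.
  have [_ h2] := @arith_truth n K (xS S) (aS S 0) (aS S 1) (aS S 2) (aS S 3) ltac:(lia) xK
     ltac:(move: hS; rewrite cost_aS; lia).
  have [e0 e1 e2 e3 e4] := h2 ltac:(lia).
  by apply: eq_config; rewrite ?e0 ?e1 ?e2 ?e3 ?e4 ?xS_St ?aS_St.
Qed.

Lemma R_manip : R_er K.+1 cc 2 (PP [set pq]) = Sm.
Proof.
have c1 : #|[set pq]| <= 2 by rewrite cards1.
apply: R_er_unique.
- by apply/subsetP => p; rewrite inE => /andP [h _]; apply: in_bigU.
- by rewrite cost_aS xS_Sm !aS_Sm //=; lia.
- move=> S hS; rewrite er_le // !Nm_eq xS_Sm !aS_Sm //= leq_add2l.
  have [xK _] := xS_full S.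
  have [h1 _] := @arith_manip n K (xS S) (aS S 0) (aS S 1) (aS S 2) (aS S 3) ltac:(lia) xK
     ltac:(move: hS; rewrite cost_aS; lia).
  lia.
- move=> S hS; rewrite er_le // !Nm_eq xS_Sm !aS_Sm //= leq_add2l => hle.
  have [xK _] := xS_full S.
  have [_ h2] := @arith_manip n K (xS S) (aS S 0) (aS S 1) (aS S 2) (aS S 3) ltac:(lia) xK
     ltac:(move: hS; rewrite cost_aS; lia).
  have [e0 e1 e2 e3 e4] := h2 ltac:(lia).
  by apply: eq_config; rewrite ?e0 ?e1 ?e2 ?e3 ?e4 ?xS_Sm ?aS_Sm.
Qed.

End Inst.

Lemma upd_truth (K : nat) : upd (@PP K set0) ord0 [set pt K] = @PP K [set pt K].
Proof.
apply: functional_extensionality => j; rewrite /upd /PP /PPn.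
case: (eqVneq j ord0) => [->|h] //.
have -> : (val j == 0) = false by apply/negbTE; exact: h.
by [].
Qed.

Lemma upd_manip (K : nat) : upd (@PP K [set pt K]) ord0 [set pq K] = @PP K [set pq K].
Proof.
apply: functional_extensionality => j; rewrite /upd /PP /PPn.
case: (eqVneq j ord0) => [->|h] //.
have -> : (val j == 0) = false by apply/negbTE; exact: h.
by [].
Qed.

Lemma manip_ok (K : nat) mt mo (F : alloc_rule) :
  is_alloc_rule F -> unanimous F ->
  successful_manip mt mo K.+1 F (@cc K) 2 (enum 'I_K.+4) (@PP K [set pt K]) ord0 [set pq K].
Proof.
move=> hF hU.
rewrite /successful_manip; cbv zeta.
rewrite upd_manip R_truth R_manip.
set Z := pr K |: [set pq K].
have v1 : val (pq K) = 1 by rewrite inordK'.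
have v2 : val (pr K) = 2 by rewrite inordK'.
have v0 : val (pt K) = 0 by rewrite inordK'.
have hQ : top (@cc K) 2 (enum 'I_K.+4) (St K :|: Sm K) = Z.
  by apply: top_Z; rewrite !inE ?v0 ?v1 ?v2.
have hZS : Z \subset Sm K by apply/subsetP => p; rewrite !inE => /orP [] /eqP ->; rewrite ?v1 ?v2.
have hmax : forall W : {set 'I_K.+4}, Z \subset W -> cost (@cc K) W <= 2 -> W = Z.
  move=> W hZW hW; apply/eqP; rewrite eqEsubset hZW andbT; apply/subsetP => p pW.
  case pZ: (p \in Z) => //; exfalso.
  have : cost (@cc K) (p |: Z) <= cost (@cc K) W by apply: cost_sub; rewrite subUset sub1set pW hZW.
  have e : cost (@cc K) (p |: Z) = cc p + 2.
    by rewrite /cost big_setU1 ?pZ //= -/(cost (@cc K) Z) /Z costZ.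
  rewrite e; have := cc_pos p; lia.
have hZ : F_star F mo (Sm K) (@cc K) 2 (enum 'I_K.+4) (ord0 : 'I_(3*K).+4) (fun _ => Z) = Z.
  have cZ : cost (@cc K) Z <= 2 by rewrite /Z costZ.
  have tZ : top (@cc K) 2 (enum 'I_K.+4) (Sm K) = Z by apply: top_Z; rewrite !inE ?v0 ?v1 ?v2.
  exact: (@F_star_Z F mo (3*K).+4 K.+4 (@cc K) 2 (enum 'I_K.+4) ord0 hF hU (valid K) (Sm K) Z hZS cZ hmax tZ).
have h0 : forall A, profile_on (St K) A ->
    util mo (@cc K) Z (F_star F mo (St K) (@cc K) 2 (enum 'I_K.+4) (ord0 : 'I_(3*K).+4) A) = 0.
  move=> A hA; apply: util0.
  have hs := @F_star_sub F mo _ _ (@cc K) 2 (enum 'I_K.+4) ord0 hF (valid K) (St K) A hA.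
  apply/setP => p; rewrite !inE; apply/negbTE/negP => /andP [pF pz].
  have := subsetP hs p pF; rewrite inE.
  by move: pz => /orP [] /eqP ->; rewrite ?v1 ?v2.
have hpos : 0 < util mo (@cc K) Z Z.
  case: mo {hZ h0}; rewrite /util setIid.
    by apply/card_gt0P; exists (pr K); rewrite !inE eqxx.
  by rewrite /Z costZ.
have prof0 : profile_on (St K) (fun _ : 'I_(3 * K).+4 => set0) by move=> j; exact: sub0set.
have profZ : profile_on (Sm K) (fun _ : 'I_(3 * K).+4 => Z) by move=> j.
rewrite hQ.
case: mt.
  split.
    by move=> A A' hA hA'; rewrite h0.
  exists (fun _ => set0), (fun _ => Z); split => //; split => //.
  by rewrite h0 // hZ.
exists (fun _ => set0), (fun _ => Z); split => //; split => //.
by rewrite h0 // hZ.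
Qed.

Theorem proposition6 :
  forall (mo : pref_model) (k : nat), 0 < k ->
  forall F : alloc_rule, is_alloc_rule F -> unanimous F ->
    ~ UFSSP Pessimistic mo k F /\ ~ UFSSP Optimistic mo k F.
Proof.
move=> mo [|K] // _ F hF hU.
have main : forall mt, ~ UFSSP mt mo K.+1 F.
  move=> mt H.
  pose C := fun j : 'I_(3 * K).+4 => if j == ord0 then [set pt K] else @PP K set0 j.
  have hPC : forall j, @PP K set0 j \subset C j.
    move=> j; rewrite /C; case: ifP => [/eqP -> | _]; last exact: subxx.
    by rewrite /PP /PPn /= sub0set.
  have hP' : [set pq K] \subset C ord0 :|: Defs.bigU (@PP K set0).
    by rewrite sub1set inE in_bigU ?orbT // inordK'.
  apply: (H _ _ (@cc K) 2 (fun _ => enum 'I_K.+4) (valid K) (fun _ => perm_refl _) C (@PP K set0) hPC ord0 _ hP').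
  rewrite top_t; last by rewrite /C eqxx inE set11.
  rewrite upd_truth.
  exact: manip_ok.
by split; apply: main.
Qed.
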